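(* Let $h\ge 3$ and let $W\in\mathcal W^2_{h\times 3}$ be an atomic $2$-full word. Then $W$ contains a bench with its seat in column $1$ and legs in column $2$, and a bench with its seat in column $3$ and legs in column $2$.
   Context: A 2-dimensional binary word of dimensions $h\times w$ is an $h\times w$ matrix with entries in $\{\square,\blacksquare\}$ (filled cells $\blacksquare$, empty cells $\square$). Two cells $(i,j),(i',j')$ are adjacent if $|i-i'|+|j-j'|=1$; the degree of a filled cell is the number of filled cells adjacent to it. $\mathcal W^2_{h\times w}$ is the set of $h\times w$ binary words in which every filled cell has degree at most $2$; $W$ is $2$-full if its number of filled cells is maximal in $\mathcal W^2_{h\times w}$. $W$ is atomic if no row of $W$ consists only of empty cells. For columns $j,j'$ with $|j-j'|=1$, a bench with seat in column $j$ and legs in column $j'$ is given by integers $n\ge 3$ and $i$ with $1\le i\le i+n-1\le h$ such that the cells $(i,j),(i+1,j),\dots,(i+n-1,j)$ are all filled, the cells $(i,j')$ and $(i+n-1,j')$ are filled, and the cells $(i+1,j'),\dots,(i+n-2,j')$ are empty. *)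

(* Defs.v *)
(* Binary words are boolean matrices: true = filled cell. *)
From mathcomp Require Import all_boot all_algebra.
Set Implicit Arguments. Unset Strict Implicit. Unset Printing Implicit Defensive.

Section Words.
Variables h w : nat.

(* value of cell (i, j) with 0-based nat coordinates; false outside the grid *)
Definition filled (W : 'M[bool]_(h, w)) (i j : nat) : bool :=
  match @insub nat (fun k => k < h) _ i, @insub nat (fun k => k < w) _ j with
  | Some a, Some b => W a b
  | _, _ => false
  end.

Definition adjacent (c d : 'I_h * 'I_w) : bool :=
  let: (i, j) := c in let: (i', j') := d in
  [|| ((i : nat) == i'.+1) && ((j : nat) == j'),
      ((i' : nat) == i.+1) && ((j : nat) == j'),
      ((i : nat) == i') && ((j : nat) == j'.+1)
    | ((i : nat) == i') && ((j' : nat) == j.+1)].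

Definition degree (W : 'M[bool]_(h, w)) (c : 'I_h * 'I_w) : nat :=
  #|[set d : 'I_h * 'I_w | W d.1 d.2 && adjacent c d]|.

Definition nfilled (W : 'M[bool]_(h, w)) : nat :=
  #|[set c : 'I_h * 'I_w | W c.1 c.2]|.

Definition inW2 (W : 'M[bool]_(h, w)) : Prop :=
  forall c : 'I_h * 'I_w, W c.1 c.2 -> degree W c <= 2.

Definition two_full (W : 'M[bool]_(h, w)) : Prop :=
  inW2 W /\ forall W' : 'M[bool]_(h, w), inW2 W' -> nfilled W' <= nfilled W.

Definition atomic (W : 'M[bool]_(h, w)) : Prop :=
  forall i : 'I_h, exists j : 'I_w, W i j.

(* bench with seat in column j and legs in column j' (0-based columns, 0-based
   starting row i); n >= 3 is the length of the seat *)
Definition bench (W : 'M[bool]_(h, w)) (j j' : nat) : Prop :=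
  [/\ j < w, j' < w & ((j.+1 == j') || (j'.+1 == j))] /\
  exists n i : nat,
    [/\ 3 <= n, i + n <= h,
        (forall k, k < n -> filled W (i + k) j),
        filled W i j' && filled W (i + n - 1) j'
      & (forall k, 0 < k -> k < n - 1 -> ~~ filled W (i + k) j')].

End Words.

(* Main.v *)
Require Import Defs.
From mathcomp Require Import all_boot all_algebra zify.
From Stdlib Require Import Classical.
Set Implicit Arguments. Unset Strict Implicit. Unset Printing Implicit Defensive.
Definition row := (bool * bool * bool)%type.
Definition stt := (row * row * nat)%type.
Definition pc (r:row) : nat := let: (x,y,z) := r in x + y + z.
Definition rowok (a b c : row) : bool :=
  let: (a0,a1,a2) := a in let: (b0,b1,b2) := b in let: (c0,c1,c2) := c in
  [&& b0 ==> (a0 + c0 + b1 <= 2), b1 ==> (a1 + c1 + b0 + b2 <= 2)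
    & b2 ==> (a2 + c2 + b1 <= 2)].
Definition newt (s:stt) (c:row) : nat :=
  let: (a,b,t) := s in
  if c.1.1 then (if b.1.1 && (t != 0) then minn t.+1 3 else (if c.1.2 then 1 else 0)) else 0.
Definition badb (s:stt) (c:row) : bool :=
  let: (a,b,t) := s in [&& c.1.1, c.1.2, b.1.1 & 2 <= t].
Definition upd (s:stt) c : stt := (s.1.2, c, newt s c).
Definition valid (s:stt) c := rowok s.1.1 s.1.2 c && ~~ badb s c.
Definition table : seq (row*row*nat*nat) := [::
  ((false,false,false),(false,false,false),0, 10);
  ((false,false,false),(true,false,false),0, 9);
  ((false,false,false),(false,true,false),0, 9);
  ((false,false,false),(true,true,false),1, 10);
  ((false,false,false),(false,false,true),0, 9);
  ((false,false,false),(true,false,true),0, 10);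
  ((false,false,false),(false,true,true),0, 10);
  ((false,false,false),(true,true,true),1, 11);
  ((true,false,false),(true,false,false),0, 9);
  ((true,false,false),(true,false,false),3, 9);
  ((true,false,false),(false,true,false),0, 9);
  ((true,false,false),(true,true,false),1, 10);
  ((true,false,false),(false,false,true),0, 9);
  ((true,false,false),(true,false,true),0, 10);
  ((true,false,false),(true,false,true),3, 10);
  ((true,false,false),(false,true,true),0, 10);
  ((true,false,false),(true,true,true),1, 11);
  ((false,true,false),(true,false,false),0, 9);
  ((false,true,false),(false,true,false),0, 9);
  ((false,true,false),(true,true,false),1, 10);
  ((false,true,false),(false,false,true),0, 9);
  ((false,true,false),(true,false,true),0, 10);
  ((false,true,false),(false,true,true),0, 10);
  ((false,true,false),(true,true,true),1, 11);
  ((true,true,false),(true,false,false),2, 10);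
  ((true,true,false),(false,true,false),0, 9);
  ((true,true,false),(true,true,false),2, 10);
  ((true,true,false),(false,false,true),0, 10);
  ((true,true,false),(true,false,true),2, 11);
  ((true,true,false),(false,true,true),0, 10);
  ((true,true,false),(true,true,true),2, 11);
  ((false,false,true),(true,false,false),0, 9);
  ((false,false,true),(false,true,false),0, 9);
  ((false,false,true),(true,true,false),1, 10);
  ((false,false,true),(false,false,true),0, 9);
  ((false,false,true),(true,false,true),0, 10);
  ((false,false,true),(false,true,true),0, 10);
  ((false,false,true),(true,true,true),1, 11);
  ((true,false,true),(true,false,false),0, 9);
  ((true,false,true),(true,false,false),3, 10);
  ((true,false,true),(false,true,false),0, 10);
  ((true,false,true),(true,true,false),1, 10);
  ((true,false,true),(false,false,true),0, 10);
  ((true,false,true),(true,false,true),0, 10);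
  ((true,false,true),(true,false,true),3, 11);
  ((true,false,true),(false,true,true),0, 11);
  ((true,false,true),(true,true,true),1, 11);
  ((false,true,true),(true,false,false),0, 10);
  ((false,true,true),(false,true,false),0, 10);
  ((false,true,true),(true,true,false),1, 11);
  ((false,true,true),(false,false,true),0, 9);
  ((false,true,true),(true,false,true),0, 10);
  ((false,true,true),(false,true,true),0, 10);
  ((false,true,true),(true,true,true),1, 11);
  ((true,true,true),(true,false,false),2, 10);
  ((true,true,true),(false,false,true),0, 10);
  ((true,true,true),(true,false,true),2, 11)].
Fixpoint look (l : seq (row*row*nat*nat)) (s : stt) : option nat :=
  match l with [::] => None | e :: l' => if e.1 == s then Some e.2 else look l' s end.
Definition allrows : seq row := [:: (false,false,false); (true,false,false); (false,true,false); (true,true,false); (false,false,true); (true,false,true); (false,true,true); (true,true,true)].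
Definition chk : bool :=
  all (fun e => (e.2 <= 11) && all (fun c => (c == (false,false,false)) || ~~ valid e.1 c ||
        match look table (upd e.1 c) with Some w' => e.2 + pc c <= w' + 2 | None => false end) allrows) table.
Lemma chk_true : chk. Proof. by vm_compute. Qed.
Set Implicit Arguments. Unset Strict Implicit. Unset Printing Implicit Defensive.
From Stdlib Require Import Classical.

Definition nb (f : nat -> nat -> bool) i j : nat :=
  ((0 < i) && f i.-1 j) + f i.+1 j + ((0 < j) && f i j.-1) + f i j.+1.

Lemma look_in s w : look table s = Some w -> (s, w) \in table.
Proof.
elim: table => //= [[s' w']] l IH /=; case: eqP => [<- [<-]|_ /IH].
  exact: mem_head.
by rewrite inE => ->; rewrite orbT.
Qed.

Lemma chk_step s w c : look table s = Some w -> c != (false,false,false) -> valid s c ->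
  exists w', look table (upd s c) = Some w' /\ w + pc c <= w' + 2.
Proof.
move=> /look_in Hin Hc Hv.
have /andP [_ /allP H] := allP chk_true _ Hin.
have : c \in allrows by case: c Hc {Hv} => [[[] []] []].
move=> /H; rewrite (negbTE Hc) Hv orFb orFb.
rewrite -[(s,w).1]/(s) -[(s,w).2]/(w); case E: (look table (upd s c)) => [w'|] //.
by exists w'.
Qed.

Lemma chk_bound s w : look table s = Some w -> w <= 11.
Proof.
move=> /look_in Hin.
by have /andP [] := allP chk_true _ Hin.
Qed.

Section Abs.
Variables (h : nat) (f : nat -> nat -> bool).
Hypothesis Hout : forall i j, (h <= i) || (3 <= j) -> f i j = false.
Hypothesis Hloc : forall i j, i < h -> j < 3 -> f i j -> nb f i j <= 2.
Hypothesis Hat : forall i, i < h -> [|| f i 0, f i 1 | f i 2].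
Hypothesis Hsum : 2 * h + 2 <= \sum_(i < h) (f i 0 + f i 1 + f i 2).

Definition R k : row := (f k 0, f k 1, f k 2).
Definition Q k : row := ((0 < k) && f k.-1 0, (0 < k) && f k.-1 1, (0 < k) && f k.-1 2).
Arguments pc : simpl never.
Fixpoint sts k : stt := if k is k'.+1 then upd (sts k') (R k') else ((false,false,false),(false,false,false),0).

Lemma sts_rows k : (sts k).1 = (Q k.-1, Q k).
Proof. by elim: k => [|k IH] //=; rewrite IH. Qed.

Lemma tinv k d : (sts k).2 = d.+1 ->
  exists r, [/\ r + d.+1 <= k, f r 1 & forall m, r <= m < k -> f m 0].
Proof.
elim: k d => [|k IH] d //=.
rewrite /newt; case: (sts k) IH (sts_rows k) => [[a b] t] IH /= [_ ->] /=.
case Hk0: (f k 0) => //.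
case: ifP => [/andP [_ tn0] Hd | _].
  case: t tn0 IH Hd => // t _ IH Hd.
  have [r [Hr1 Hr2 Hr3]] := IH _ erefl.
  exists r; split => //.
    have : d.+1 <= t.+2 by rewrite -Hd geq_minl.
    lia.
  move=> m /andP [Hm1 Hm2]; have [->|Hne] := eqVneq m k => //.
  by apply: Hr3; rewrite Hm1 /=; lia.
case Hk1: (f k 1) => //; move=> [<-].
exists k; split => //; first lia.
move=> m Hm; have -> : m = k by lia.
done.
Qed.


Definition benchf := exists n i, [/\ 3 <= n, i + n <= h, (forall k, k < n -> f (i+k) 0),
   f i 1 && f (i+n-1) 1 & (forall k, 0 < k -> k < n-1 -> ~~ f (i+k) 1)].

Lemma mk_bench r k : r + 2 <= k -> k < h -> f r 1 -> f k 0 -> f k 1 ->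
  (forall m, r <= m < k -> f m 0) -> benchf.
Proof.
move=> Hrk Hkh Hr1 Hk0 Hk1 Hrun.
have run2 : forall m, r <= m <= k -> f m 0.
  move=> m /andP [H1 H2]; have [->|Hne] := eqVneq m k => //.
  by apply: Hrun; rewrite H1 /=; lia.
exists (k - r).+1, r; split.
- lia.
- lia.
- move=> k' Hk'; apply: run2; apply/andP; split; lia.
- have -> : r + (k - r).+1 - 1 = k by lia.
  by rewrite Hr1 Hk1.
move=> k' Hk1' Hk2'.
have Hm0 : f (r + k') 0 by apply: run2; apply/andP; split; lia.
have := @Hloc (r + k') 0 ltac:(lia) erefl Hm0; rewrite /nb /=.
have -> : 0 < r + k' by lia.
have -> : f (r + k').-1 0 by apply: run2; apply/andP; split; lia.
have -> : f (r + k').+1 0 by apply: run2; apply/andP; split; lia.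
by case: (f (r + k') 1).
Qed.

Lemma rowok_Q k : k < h -> rowok (Q k.-1) (Q k) (R k).
Proof.
case: k => [|k] Hk.
  by rewrite /Q /R /rowok /=; case: (f 0 0); case: (f 0 1); case: (f 0 2).
rewrite /Q /R /rowok /=.
have Hk' : k < h by lia.
apply/and3P; split; apply/implyP => H.
- have := @Hloc k 0 Hk' erefl H; rewrite /nb /=; lia.
- have := @Hloc k 1 Hk' erefl H; rewrite /nb /=; lia.
- have := @Hloc k 2 Hk' erefl H; rewrite /nb /= (@Hout k 3) //=; lia.
Qed.

Lemma main_abs : benchf.
Proof.
case: (classic benchf) => // Hnb.
have inv : forall k, k <= h -> exists w, look table (sts k) = Some w /\
   \sum_(i < k) pc (R i) + 10 <= w + 2 * k.
  elim=> [|k IH] Hk.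
    by exists 10; rewrite big_ord0.
  have [w [Hw Hs]] := IH ltac:(lia).
  have Hkh : k < h by lia.
  have Hv : valid (sts k) (R k).
    rewrite /valid; apply/andP; split.
      by rewrite sts_rows /=; apply: rowok_Q.
    have := sts_rows k; have := @tinv k.
    case: (sts k) => [[a b] t] /= Ht [Ha Hb]; rewrite Hb.
    apply/negP => /and4P [Hk0 Hk1 Hq Ht2].
    case: t Ht Ht2 => // [] // t Ht Ht2.
    have [r [Hr1 Hr2 Hr3]] := Ht t erefl.
    apply: Hnb; apply: (@mk_bench r k) => //; lia.
  have Hc : R k != (false,false,false).
    have := Hat Hkh; rewrite /R.
    by case: (f k 0); case: (f k 1); case: (f k 2).
  have [w' [Hw' Hs']] := chk_step Hw Hc Hv.
  exists w'; split => //.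
  have -> : \sum_(i < k.+1) pc (R i) = \sum_(i<k) pc (R i) + pc (R k) by rewrite big_ord_recr.
  lia.
have [w [Hw Hs]] := inv h (leqnn h).
have := chk_bound Hw.
have : \sum_(i < h) pc (R i) = \sum_(i < h) (f i 0 + f i 1 + f i 2) by [].
lia.
Qed.

End Abs.

Lemma sum_sel1 n (g : nat -> nat) p : (forall a, a != p -> g a = 0) ->
  \sum_(a < n) g a = (p < n) * g p.
Proof.
move=> Hg; elim: n => [|n IH]; first by rewrite big_ord0.
rewrite big_ord_recr /= IH.
have [->|Hne] := eqVneq n p.
  by rewrite ltnn ltnSn mul0n mul1n.
rewrite (Hg n Hne) addn0.
by have -> : (p < n.+1) = (p < n) by lia.
Qed.

Section W.
Variables h w : nat.
Variable W : 'M[bool]_(h, w).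

Lemma filled_ord (a : 'I_h) (b : 'I_w) : filled W a b = W a b.
Proof. by rewrite /filled !valK. Qed.

Lemma filled_out i j : (h <= i) || (w <= j) -> filled W i j = false.
Proof.
rewrite /filled; case/orP => H.
  by rewrite insubN // -leqNgt.
by case: insub => // a; rewrite insubN // -leqNgt.
Qed.

Lemma card_pair (P : 'I_h -> 'I_w -> bool) :
  #|[set d : 'I_h * 'I_w | P d.1 d.2]| = \sum_(a < h) \sum_(b < w) P a b.
Proof.
rewrite (pair_big xpredT xpredT (fun a b => nat_of_bool (P a b))) /=.
rewrite -sum1dep_card big_mkcond /=; apply: eq_bigr => i _.
by case: (P _ _).
Qed.

Lemma sum2_sel (G : nat -> nat -> bool) p q :
  (forall a b, G a b -> a = p /\ b = q) ->
  \sum_(a < h) \sum_(b < w) G a b = (p < h) && (q < w) && G p q.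
Proof.
move=> HG.
rewrite (@sum_sel1 h (fun a => \sum_(b < w) G a b) p).
  rewrite (@sum_sel1 w (fun b => nat_of_bool (G p b)) q).
    by case: (p < h); case: (q < w); case: (G p q).
  move=> b Hb; case E: (G p b) => //; have [_ Hq] := HG _ _ E.
  by move: Hb; rewrite Hq eqxx.
move=> a Ha; apply: big1 => b _; case E: (G a b) => //; have [Hp _] := HG _ _ E.
by move: Ha; rewrite Hp eqxx.
Qed.

Lemma degreeE (x : 'I_h) (y : 'I_w) : degree W (x, y) = nb (filled W) x y.
Proof.
have -> : degree W (x, y) = #|[set d : 'I_h * 'I_w |
   (fun a b => W a b && adjacent (x, y) (a, b)) d.1 d.2]|.
  by apply: eq_card => -[a b]; rewrite !inE.
rewrite (card_pair (fun a b => W a b && adjacent (x, y) (a, b))).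
set F := filled W.
have E : forall (a : 'I_h) (b : 'I_w), nat_of_bool (W a b && adjacent (x, y) (a, b)) =
   (F a b && (((x:nat) == a.+1) && ((y:nat) == b))) + (F a b && (((a:nat) == x.+1) && ((y:nat) == b)))
   + (F a b && (((x:nat) == a) && ((y:nat) == b.+1))) + (F a b && (((x:nat) == a) && ((b:nat) == y.+1))).
  move=> a b; rewrite /F filled_ord /adjacent; case: (W a b) => /=; lia.
rewrite (eq_bigr _ (fun a _ => eq_bigr _ (fun b _ => E a b))).
rewrite (eq_bigr _ (fun a _ => big_split _ _ _ _ _)) big_split /=.
rewrite (eq_bigr _ (fun a _ => big_split _ _ _ _ _)) big_split /=.
rewrite (eq_bigr _ (fun a _ => big_split _ _ _ _ _)) big_split /=.
rewrite (@sum2_sel (fun a b : nat => F a b && (((x:nat) == a.+1) && ((y:nat) == b))) x.-1 y)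
   ?(@sum2_sel (fun a b : nat => F a b && ((a == x.+1) && ((y:nat) == b))) x.+1 y)
   ?(@sum2_sel (fun a b : nat => F a b && (((x:nat) == a) && ((y:nat) == b.+1))) x y.-1)
   ?(@sum2_sel (fun a b : nat => F a b && (((x:nat) == a) && (b == y.+1))) x y.+1);
  try (move=> a b /andP [_ H]; split; lia).
rewrite /nb !eqxx.
have Hx := ltn_ord x; have Hy := ltn_ord y.
have F1 : F x.+1 y = (x.+1 < h) && F x.+1 y.
  by case: (ltnP x.+1 h) => H //; rewrite /F filled_out // H.
have F2 : F x y.+1 = (y.+1 < w) && F x y.+1.
  by case: (ltnP y.+1 w) => H //; rewrite /F filled_out // H orbT.
have -> : (x.-1 < h) = true by lia.
have -> : (y.-1 < w) = true by lia.
have -> : ((x:nat) == x.-1.+1) = (0 < x) by move: (x : nat) => n; case: n => // n; rewrite eqxx.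
have -> : ((y:nat) == y.-1.+1) = (0 < y) by move: (y : nat) => n; case: n => // n; rewrite eqxx.
rewrite Hx Hy F1 F2 /=.
by case: (0 < x); case: (0 < y); case: (x.+1 < h); case: (y.+1 < w);
  case: (F x.-1 y); case: (F x.+1 y); case: (F x y.-1); case: (F x y.+1).
Qed.
End W.

Section H.
Variable h : nat.

Lemma nfilledE (W : 'M[bool]_(h, 3)) :
  nfilled W = \sum_(i < h) (filled W i 0 + filled W i 1 + filled W i 2).
Proof.
have -> : nfilled W = #|[set d : 'I_h * 'I_3 | (fun a b => W a b) d.1 d.2]| by [].
rewrite card_pair; apply: eq_bigr => i _.
rewrite (eq_bigr (fun b : 'I_3 => nat_of_bool (filled W i b))); last by move=> b _; rewrite filled_ord.
by rewrite !big_ord_recr big_ord0 /=.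
Qed.

Lemma inW2_loc (W : 'M[bool]_(h, 3)) : inW2 W ->
  forall i j, i < h -> j < 3 -> filled W i j -> nb (filled W) i j <= 2.
Proof.
move=> HW i j Hi Hj Hf.
have := HW (Ordinal Hi, Ordinal Hj); rewrite degreeE /=; apply.
by rewrite -filled_ord.
Qed.

Definition Wc : 'M[bool]_(h, 3) :=
  \matrix_(i < h, j < 3) [|| (i == 0 :> nat), (i == h.-1 :> nat) | (j != 1 :> nat)].

Lemma filledWc i j : filled Wc i j = [&& i < h, j < 3 & [|| i == 0, i == h.-1 | j != 1]].
Proof.
case: (ltnP i h) => Hi; last by rewrite filled_out // Hi.
case: (ltnP j 3) => Hj; last by rewrite filled_out // Hj orbT.
have -> : filled Wc i j = filled Wc (Ordinal Hi) (Ordinal Hj) by [].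
by rewrite filled_ord mxE.
Qed.

Lemma Wc_in : 3 <= h -> inW2 Wc.
Proof.
move=> Hh [x y] /= Hxy; rewrite degreeE /nb !filledWc.
move: Hxy; rewrite -filled_ord filledWc.
have := ltn_ord x; have := ltn_ord y.
move: (x : nat) (y : nat) => a b.
lia.
Qed.


Lemma nfilledWc : 3 <= h -> nfilled Wc = 2 * h + 2.
Proof.
move=> Hh; rewrite nfilledE.
rewrite (eq_bigr (fun i : 'I_h => 2 + (((i:nat) == 0) + ((i:nat) == h.-1)))); last first.
  move=> i _; rewrite !filledWc; have := ltn_ord i; move: (i : nat) => a; lia.
rewrite big_split /= sum_nat_const card_ord big_split /=.
rewrite (@sum_sel1 h (fun a => nat_of_bool (a == 0)) 0); last by move=> a /negbTE ->.
rewrite (@sum_sel1 h (fun a => nat_of_bool (a == h.-1)) h.-1); last by move=> a /negbTE ->.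
rewrite !eqxx; lia.
Qed.

End H.

Lemma bench_of h (W : 'M[bool]_(h, 3)) j (g : nat -> nat -> bool) :
  j < 3 -> (forall i, g i 0 = filled W i j) -> (forall i, g i 1 = filled W i 1) ->
  (j = 0 \/ j = 2) -> benchf h g -> bench W j 1.
Proof.
move=> Hj H0 H1 Hj2 [n [i [? ? Hs Hl Hi]]]; split.
  by case: Hj2 => ->.
exists n, i; split => //.
- by move=> k /Hs; rewrite H0.
- by rewrite -!H1.
- by move=> k ? ?; rewrite -H1; apply: Hi.
Qed.

Unset Implicit Arguments.
Theorem mainTheorem5 (h : nat) (W : 'M[bool]_(h, 3)) :
  3 <= h -> inW2 W -> two_full W -> atomic W ->
  bench W 0 1 /\ bench W 2 1.
Proof.
move=> Hh HW [_ Hmax] Hat.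
have Hout : forall i j, (h <= i) || (3 <= j) -> filled W i j = false.
  by move=> i j; apply: filled_out.
have Hloc := inW2_loc HW.
have Hat' : forall i, i < h -> [|| filled W i 0, filled W i 1 | filled W i 2].
  move=> i Hi; have [y Hy] := Hat (Ordinal Hi).
  have : filled W i y by rewrite -[i]/(nat_of_ord (Ordinal Hi)) filled_ord.
  case: y {Hy} => -[|[|[|m]]] Hm //= ->; by rewrite ?orbT.
have Hsum : 2 * h + 2 <= \sum_(i < h) (filled W i 0 + filled W i 1 + filled W i 2).
  by rewrite -nfilledE -(nfilledWc Hh); apply: Hmax; apply: Wc_in.
split.
  apply: (@bench_of h W 0 (filled W)) => //; first by left.
  exact: main_abs Hout Hloc Hat' Hsum.
pose g i j := if j == 0 then filled W i 2 else if j == 1 then filled W i 1 else if j == 2 then filled W i 0 else false.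
apply: (@bench_of h W 2 g) => //; first by right.
apply: (@main_abs h g).
- move=> i j Hij; rewrite /g.
  case: j Hij => [|[|[|j]]] Hij //=; apply: Hout; case/orP: Hij => [->//|//].
- move=> i j Hi Hj; rewrite /g.
  have H3 := Hout i 3 ltac:(by rewrite orbT).
  case: j Hj => [|[|[|j]]] //= _ Hf.
  + have := Hloc i 2 Hi erefl Hf; rewrite /nb /= H3; lia.
  + have := Hloc i 1 Hi erefl Hf; rewrite /nb /=; lia.
  + have := Hloc i 0 Hi erefl Hf; rewrite /nb /=; lia.
- move=> i Hi; rewrite /g /=; have := Hat' i Hi.
  by case: (filled W i 0); case: (filled W i 1); case: (filled W i 2).
- apply: (leq_trans Hsum); rewrite leq_eqVlt; apply/orP; left; apply/eqP.
  apply: eq_bigr => i _; rewrite /g /=; lia.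
Qed.
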